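(* Let $L\ge1$ be an integer and $g$ a real polynomial of degree at most $L$ with $g(0)=g'(0)=0$. Let $a<0<b$ and suppose $|g(x)|\le|x|$ for all $x\in[a,b]$. Then \[ |g(x)|\le \frac{8L^2}{b-a}x^2\quad\text{for all } x\in[a/4,b/4]\text{ with } |x|\le\frac{3(b-a)}{L^2}, \] and \[ |g(x)|\le \frac{4L}{\sqrt{|ab|}}x^2\quad\text{for all } x\in[a/4,b/4]\text{ with } |x|\le\frac{\sqrt{|ab|}}{4L}. \] *)

(* Defs.v *)
From mathcomp Require Import all_boot all_order all_algebra.
From mathcomp Require Import reals.

(* Main.v *)
Require Import Defs.
From mathcomp Require Import all_boot all_order all_algebra.
From mathcomp Require Import reals.
From mathcomp Require Import trigo.
From mathcomp Require Import polyrcf.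
From mathcomp Require Import zify ring lra.
Import Order.TTheory GRing.Theory Num.Theory.
Local Open Scope ring_scope.
Section Interp.
Variable R : realType.
Implicit Types (s f : nat -> R) (p q : {poly R}).

Lemma sgn2 j : (-1) ^+ j * (-1) ^+ j = 1 :> R.
Proof. by rewrite -exprMn mulrNN mulr1 expr1n. Qed.

Definition idx (m j : nat) := iota 0 j ++ iota j.+1 (m - j).

Lemma mem_idx m j i : (j <= m)%N -> (i \in idx m j) = (i <= m)%N && (i != j).
Proof.
move=> jm; rewrite mem_cat !mem_iota add0n.
case: (ltngtP i j) => [h|h|->]; rewrite ?eqxx ?andbF ?andbT /=.
- by apply/idP/idP => //; lia.
- by apply/idP/idP; lia.
- by lia.
Qed.

Lemma size_idx m j : (j <= m)%N -> size (idx m j) = m.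
Proof. by move=> jm; rewrite size_cat !size_iota; lia. Qed.

Definition Nj s m j : {poly R} := \prod_(i <- idx m j) ('X - (s i)%:P).
Definition cj s m j : R := (\prod_(i <- idx m j) (s j - s i))^-1.
Definition lj s m j : {poly R} := cj s m j *: Nj s m j.

Lemma hornerNj s m j x : (Nj s m j).[x] = \prod_(i <- idx m j) (x - s i).
Proof. by rewrite /Nj horner_prod; apply: eq_bigr => i _; rewrite hornerXsubC. Qed.

Lemma size_lj s m j : (j <= m)%N -> (size (lj s m j) <= m.+1)%N.
Proof.
move=> jm; apply: (leq_trans (size_scale_leq _ _)).
by rewrite /Nj size_prod_XsubC size_idx.
Qed.

Hypothesis dummy : True.

Definition sdec s m := forall i j, (i < j)%N -> (j <= m)%N -> s j < s i.

Lemma sdec_neq s m i j : sdec s m -> (i <= m)%N -> (j <= m)%N -> i != j -> s i != s j.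
Proof.
move=> sd im jm ij; case: (ltngtP i j) => h.
- by rewrite gt_eqF // sd.
- by rewrite lt_eqF // sd.
- by rewrite h eqxx in ij.
Qed.

Lemma lj_eval s m i j : sdec s m -> (i <= m)%N -> (j <= m)%N ->
  (lj s m j).[s i] = (i == j)%:R.
Proof.
move=> sd im jm; rewrite /lj hornerZ hornerNj /cj.
have [->|ij] := eqVneq i j.
  rewrite mulVf //; rewrite prodf_seq_neq0; apply/allP => k.
  rewrite mem_idx // => /andP[km kj] /=; rewrite subr_eq0 eq_sym.
  exact: @sdec_neq s m k j sd km jm kj.
rewrite [X in _ * X](big_rem i) /=; last by rewrite mem_idx // im.
by rewrite subrr mul0r mulr0.
Qed.

Lemma interp s m p : sdec s m -> (size p <= m.+1)%N ->
  p = \sum_(j < m.+1) p.[s j] *: lj s m j.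
Proof.
move=> sd sp; apply/eqP; rewrite -subr_eq0; apply/eqP.
set q := _ - _.
have qroot : forall i, (i <= m)%N -> q.[s i] = 0.
  move=> i im; rewrite /q hornerD hornerN horner_sum.
  rewrite (eq_bigr (fun j : 'I_m.+1 => p.[s j] * (i == j)%:R)); last first.
    by move=> j _; rewrite hornerZ lj_eval // -ltnS.
  rewrite (bigD1 (Ordinal (im : (i < m.+1)%N))) //= eqxx mulr1 big1 ?addr0 ?subrr //.
  move=> j /negP jn; case: eqP => [ij|]; last by rewrite mulr0.
  by exfalso; apply: jn; apply/eqP/val_inj => /=; rewrite ij.
apply/eqP; apply: contraT => qn0.
have := @max_poly_roots _ q [seq s i | i <- iota 0 m.+1] qn0.
rewrite size_map size_iota.
have -> : all (root q) [seq s i | i <- iota 0 m.+1].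
  apply/allP => x /mapP [i]; rewrite mem_iota => /andP[_ im] ->.
  by apply/eqP; apply: qroot; rewrite -ltnS.
have -> : uniq [seq s i | i <- iota 0 m.+1].
  rewrite map_inj_in_uniq ?iota_uniq // => i j; rewrite !mem_iota => /andP[_ im] /andP[_ jm] e.
  apply/eqP; apply: contraT => ij; have := @sdec_neq s m i j sd.
  rewrite e eqxx; apply => //; lia.
move=> /(_ isT isT); rewrite ltnNge => /negP H; exfalso; apply: H; clear qroot qn0.
rewrite /q (leq_trans (size_polyD _ _)) // geq_max sp size_polyN.
rewrite (leq_trans (size_sum _ _ _)) //; apply/bigmax_leqP => j _.
apply: leq_trans (size_scale_leq _ _) _; apply: size_lj; by rewrite -ltnS.
Qed.

Lemma altern_bound s m (Phi : {poly R} -> R) p (Rp : {poly R}) :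
  {morph Phi : x y / x + y} -> Phi 0 = 0 -> (forall c q, Phi (c *: q) = c * Phi q) ->
  sdec s m -> (size p <= m.+1)%N -> (size Rp <= m.+1)%N ->
  (forall j, (j <= m)%N -> `|p.[s j]| <= `|Rp.[s j]|) ->
  (forall j, (j <= m)%N -> 0 <= Rp.[s j] * Phi (lj s m j)) ->
  `|Phi p| <= Phi Rp.
Proof.
move=> PD P0 PZ sd sp sR hb hs.
rewrite {1}(@interp s m p sd sp) (@interp s m Rp sd sR) !(big_morph Phi PD P0).
apply: (le_trans (ler_norm_sum _ _ _)); apply: ler_sum => j _.
have jm : (j <= m)%N by rewrite -ltnS.
rewrite (PZ p.[s j]) (PZ Rp.[s j]); have h0 := hs j jm.
rewrite -(ger0_norm h0) !normrM ler_wpM2r //.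
exact: hb.
Qed.

Lemma prod_below (l : seq nat) f z : (forall i, i \in l -> z <= f i) ->
  0 <= (-1) ^+ size l * \prod_(i <- l) (z - f i).
Proof.
elim: l => [|a l IH] H; first by rewrite big_nil mulr1 expr0 ler01.
have Ha : z <= f a := H a (mem_head _ _).
have IHl := IH (fun i il => H i (@mem_behead _ (a :: l) i il)).
rewrite big_cons /= exprS.
set P := \prod_(i <- l) _ in IHl *; set e := (-1) ^+ size l in IHl *.
have -> : -1 * e * ((z - f a) * P) = (f a - z) * (e * P) by ring.
by rewrite mulr_ge0 // subr_ge0.
Qed.

Lemma prod_below_lt (l : seq nat) f z : (forall i, i \in l -> z < f i) ->
  0 < (-1) ^+ size l * \prod_(i <- l) (z - f i).
Proof.
elim: l => [|a l IH] H; first by rewrite big_nil mulr1 expr0 ltr01.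
have Ha : z < f a := H a (mem_head _ _).
have IHl := IH (fun i il => H i (@mem_behead _ (a :: l) i il)).
rewrite big_cons /= exprS.
set P := \prod_(i <- l) _ in IHl *; set e := (-1) ^+ size l in IHl *.
have -> : -1 * e * ((z - f a) * P) = (f a - z) * (e * P) by ring.
by rewrite mulr_gt0 // subr_gt0.
Qed.

Lemma prod_above_lt (l : seq nat) f z : (forall i, i \in l -> f i < z) ->
  0 < \prod_(i <- l) (z - f i).
Proof.
elim: l => [|a l IH] H; first by rewrite big_nil ltr01.
have Ha : f a < z := H a (mem_head _ _).
have IHl := IH (fun i il => H i (@mem_behead _ (a :: l) i il)).
by rewrite big_cons mulr_gt0 // subr_gt0.
Qed.

Lemma prod_above (l : seq nat) f z : (forall i, i \in l -> f i <= z) ->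
  0 <= (\prod_(i <- l) ('X - (f i)%:P)).[z] /\
  0 <= (\prod_(i <- l) ('X - (f i)%:P))^`().[z].
Proof.
elim: l => [|a l IH] H; first by rewrite big_nil hornerC derivC horner0 ler01 lexx.
have Ha : f a <= z := H a (mem_head _ _).
have [IH1 IH2] := IH (fun i il => H i (@mem_behead _ (a :: l) i il)).
rewrite big_cons derivM derivXsubC mul1r !hornerE.
split; first by rewrite mulr_ge0 // subr_ge0.
by rewrite addr_ge0 // mulr_ge0 // subr_ge0.
Qed.

Lemma cj_sign s m j : sdec s m -> (j <= m)%N -> 0 < (-1) ^+ j * cj s m j.
Proof.
move=> sd jm; rewrite /cj /idx big_cat /=.
have h1 : 0 < (-1) ^+ j * \prod_(i <- iota 0 j) (s j - s i).
  have := @prod_below_lt (iota 0 j) s (s j); rewrite size_iota; apply.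
  by move=> i; rewrite mem_iota add0n => /andP[_ ij]; apply: sd.
have h2 : 0 < \prod_(i <- iota j.+1 (m - j)) (s j - s i).
  apply: prod_above_lt => i; rewrite mem_iota => /andP[ji im]; apply: sd => //; lia.
set P1 := \prod_(i <- iota 0 j) _ in h1 *; set P2 := \prod_(i <- _) _ in h2 *.
have -> : (-1) ^+ j * (P1 * P2)^-1 = ((-1) ^+ j * P1 * P2)^-1.
  by rewrite !invfM -exprVn invrN1 mulrA.
by rewrite invr_gt0 mulr_gt0.
Qed.

Lemma sdec_le s m i j : sdec s m -> (i <= j)%N -> (j <= m)%N -> s j <= s i.
Proof.
move=> sd ij jm; case: (ltngtP i j) => h; last by rewrite h.
- by apply/ltW/sd.
- by lia.
Qed.

Lemma lj_above s m j z : sdec s m -> (j <= m)%N -> s 0%N <= z ->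
  0 <= (-1) ^+ j * (lj s m j).[z] /\ 0 <= (-1) ^+ j * (lj s m j)^`().[z].
Proof.
move=> sd jm hz; have cs := @cj_sign s m j sd jm.
have hl : forall i, i \in idx m j -> s i <= z.
  move=> i; rewrite mem_idx // => /andP[im _].
  exact: le_trans (@sdec_le s m 0 i sd (leq0n i) im) hz.
have [h1 h2] := @prod_above (idx m j) s z hl.
rewrite /lj /Nj derivZ !hornerZ !mulrA; split; apply: mulr_ge0 => //; exact: ltW.
Qed.

Lemma lj_below s m j z : sdec s m -> (j <= m)%N -> z <= s m ->
  0 <= (-1) ^+ (m + j) * (lj s m j).[z].
Proof.
move=> sd jm hz; have cs := @cj_sign s m j sd jm.
have hl : forall i, i \in idx m j -> z <= s i.
  move=> i; rewrite mem_idx // => /andP[im _].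
  exact: le_trans hz (@sdec_le s m i m sd im (leqnn m)).
have := @prod_below (idx m j) s z hl; rewrite size_idx // => h.
rewrite /lj hornerZ hornerNj exprD.
set P := \prod_(i <- _) _ in h *; set c := cj s m j in cs *.
have -> : (-1) ^+ m * (-1) ^+ j * (c * P) = ((-1) ^+ j * c) * ((-1) ^+ m * P) by ring.
by rewrite mulr_ge0 // ltW.
Qed.

Fixpoint cheb (n : nat) : {poly R} :=
  match n with
  | 0 => 1
  | n1.+1 => match n1 with
             | 0 => 'X
             | n2.+1 => cheb n1 * 'X *+ 2 - cheb n2
             end
  end.

Lemma chebSS n : cheb n.+2 = cheb n.+1 * 'X *+ 2 - cheb n.
Proof. by []. Qed.

Lemma cheb_ind (P : nat -> Prop) : P 0%N -> P 1%N ->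
  (forall n, P n -> P n.+1 -> P n.+2) -> forall n, P n.
Proof.
move=> P0 P1 PS n; suff : P n /\ P n.+1 by case.
by elim: n => [|n [h1 h2]]; split => //; exact: PS.
Qed.

Lemma size_cheb n : (size (cheb n) <= n.+1)%N.
Proof.
elim/cheb_ind: n => [||n h1 h2]; first by rewrite size_poly1.
  by rewrite /= size_polyX.
rewrite chebSS (leq_trans (size_polyD _ _)) // geq_max size_polyN.
rewrite (leq_trans h1) ?andbT //; last by lia.
rewrite mulr2n (leq_trans (size_polyD _ _)) // geq_max andbb.
apply: leq_trans (size_polyMleq _ _) _; rewrite size_polyX addn2; exact: h2.
Qed.

Lemma cos_rec (a b : R) : cos (a + b) = cos a * cos b *+ 2 - cos (a - b).
Proof. by rewrite cosD cosB; ring. Qed.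

Lemma cheb_cos n (t : R) : (cheb n).[cos t] = cos (n%:R * t).
Proof.
elim/cheb_ind: n => [||n h1 h2]; first by rewrite hornerC mul0r cos0.
  by rewrite /= hornerX mul1r.
rewrite chebSS !hornerE h1 h2.
have -> : n.+2%:R * t = n.+1%:R * t + t by rewrite -natr1 mulrDl mul1r.
by rewrite cos_rec -natr1 mulrDl mul1r addrK.
Qed.

Lemma cheb_one n : (cheb n).[1] = 1.
Proof.
elim/cheb_ind: n => [||n h1 h2]; first by rewrite hornerC.
  by rewrite /= hornerX.
by rewrite chebSS !hornerE h1 h2; ring.
Qed.

Lemma cheb_d1 n : (cheb n)^`().[1] = n%:R ^+ 2.
Proof.
elim/cheb_ind: n => [||n h1 h2]; first by rewrite derivC horner0 expr0n.
  by rewrite /= derivX hornerC expr1n.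
rewrite chebSS derivB derivMn derivM derivX hornerD hornerN hornerMn hornerD hornerM.
rewrite hornerX !mulr1 h1 h2 cheb_one -!natr1; ring.
Qed.

Lemma cheb_N n x : (cheb n).[- x] = (-1) ^+ n * (cheb n).[x].
Proof.
elim/cheb_ind: n => [||n h1 h2]; first by rewrite hornerC expr0 mul1r hornerC.
  by rewrite /= hornerX expr1 mulN1r hornerX.
by rewrite chebSS !hornerE h1 h2 !exprS; ring.
Qed.

Lemma hcheb n x : (cheb n.+2).[x] = (cheb n.+1).[x] * x *+ 2 - (cheb n).[x].
Proof. by rewrite chebSS hornerD hornerN hornerMn hornerM hornerX. Qed.

Lemma dhcheb n x : (cheb n.+2)^`().[x] =
  ((cheb n.+1)^`().[x] * x + (cheb n.+1).[x]) *+ 2 - (cheb n)^`().[x].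
Proof.
rewrite chebSS derivB derivMn derivM derivX hornerD hornerN hornerMn hornerD.
by rewrite mulr1 hornerM hornerX.
Qed.

Lemma cheb_zero k : (cheb k.*2).[0] = (-1) ^+ k /\ (cheb k.*2.+1).[0] = 0 /\
  (cheb k.*2.+1)^`().[0] = (-1) ^+ k * (k.*2.+1)%:R.
Proof.
elim: k => [|k [h1 [h2 h3]]].
  by rewrite /= hornerC hornerX derivX hornerC expr0 mulr1.
have e1 : (cheb k.+1.*2).[0] = (-1) ^+ k.+1.
  by rewrite doubleS hcheb h1 h2 exprS; ring.
split => //; rewrite doubleS; split.
  by rewrite hcheb h2 -doubleS e1; ring.
rewrite dhcheb h3 -doubleS e1.
rewrite doubleS -[(k.*2).+3]addn2 natrD mulr0 add0r exprS; ring.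
Qed.

Lemma odd_eval q x : q.[x] - q.[- x] = (odd_poly q).[x ^+ 2] * x *+ 2.
Proof.
have E y : q.[y] = (even_poly q).[y ^+ 2] + (odd_poly q).[y ^+ 2] * y.
  by rewrite -{1}(poly_even_odd q) hornerD hornerM hornerX !horner_comp hornerXn.
by rewrite !E sqrrN; ring.
Qed.

Lemma cos_npi j : cos (pi *+ j) = (-1) ^+ j :> R.
Proof. by have := alternatingn (@cosDpi R) j 0; rewrite add0r cos0 mulr1. Qed.

Lemma markov n p : (0 < n)%N -> (size p <= n.+1)%N ->
  (forall u, -1 <= u <= 1 -> `|p.[u]| <= 1) -> `|p^`().[1]| <= n%:R ^+ 2.
Proof.
move=> n0 sp hp.
have nR : 0 < n%:R :> R by rewrite ltr0n.
pose th j : R := j%:R * pi / n%:R.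
pose s j := cos (th j).
have thI j : (j <= n)%N -> th j \in `[0, pi].
  move=> jn; rewrite in_itv /= /th; apply/andP; split.
    by rewrite mulr_ge0 ?invr_ge0 ?mulr_ge0 ?pi_ge0 ?ler0n // ltW.
  by rewrite ler_pdivrMr // mulrC ler_pM2l ?pi_gt0 // ler_nat.
have sd : sdec s n.
  move=> a b ab bn; have an : (a <= n)%N by apply: leq_trans bn; apply: ltnW.
  rewrite /s ltr_cos; try by apply: thI.
  rewrite /th ltr_pM2r ?invr_gt0 // ltr_pM2r ?pi_gt0 // ltr_nat //.
have cs (jj : nat) : (cheb n).[s jj] = (-1) ^+ jj.
  rewrite /s cheb_cos /th -cos_npi; congr cos.
  by rewrite mulrCA divff ?gt_eqF // mulr1 mulr_natl.
have H := @altern_bound s n (fun q => q^`().[1]) p (cheb n).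
rewrite /= cheb_d1 in H; apply: H => //.
- by move=> x y; rewrite derivD hornerD.
- by rewrite deriv0 horner0.
- by move=> c q; rewrite derivZ hornerZ.
- exact: size_cheb.
- move=> j jn; rewrite cs normrX normrN1 expr1n hp // cos_geN1 cos_le1 //.
- move=> j jn; rewrite cs.
  have := @lj_above s n j 1 sd jn; rewrite /s /th mul0r mul0r cos0 lexx => /(_ isT).
  by case.
Qed.

Lemma deriv0_odd p : p^`().[0] = (odd_poly p).[0].
Proof. by rewrite !horner_coef0 coef_deriv coef_odd_poly mulr1n. Qed.

Lemma schur0 k p : (size p <= k.*2.+2)%N ->
  (forall u, -1 <= u <= 1 -> `|p.[u]| <= 1) -> `|p^`().[0]| <= (k.*2.+1)%:R.
Proof.
move=> sp hp.
have NR : 0 < (k.*2.+1)%:R :> R by rewrite ltr0n.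
pose th j : R := j%:R * pi / (k.*2.+1)%:R.
pose x j := cos (th j).
pose s j := x j ^+ 2.
have thI (jj : nat) : (jj <= k)%N -> 0 <= th jj /\ th jj < pi / 2.
  move=> jk; split; first by rewrite mulr_ge0 ?invr_ge0 ?mulr_ge0 ?pi_ge0 ?ler0n // ltW.
  rewrite /th mulrAC mulrC ltr_pM2l ?pi_gt0 // ltr_pdivrMr //.
  have : (jj.*2 < k.*2.+1)%N by rewrite ltnS leq_double.
  rewrite -(ltr_nat R) -muln2 natrM => h; lra.
have thpi (jj : nat) : (jj <= k)%N -> th jj \in `[0, pi].
  move=> /thI [h1 h2]; rewrite in_itv /= h1 /=.
  have := @pi_gt0 R; lra.
have xpos (jj : nat) : (jj <= k)%N -> 0 < x jj.
  move=> /thI [h1 h2]; apply: cos_gt0_pihalf; rewrite h2 andbT.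
  have := @pi_gt0 R; lra.
have sd : sdec s k.
  move=> a b ab bk; have ak : (a <= k)%N by apply: leq_trans bk; apply: ltnW.
  have xb := xpos b bk.
  have : x b < x a.
    rewrite /x ltr_cos; try by apply: thpi.
    by rewrite /th ltr_pM2r ?invr_gt0 // ltr_pM2r ?pi_gt0 // ltr_nat.
  by rewrite /s => h; nra.
set r := odd_poly p.
have sr : (size r <= k.+1)%N.
  apply: leq_trans (size_odd_poly _) _.
  by have := half_leq sp; rewrite /= doubleK.
set T := cheb k.*2.+1.
have hT (jj : nat) : (jj <= k)%N -> (odd_poly T).[s jj] * x jj = (-1) ^+ jj.
  move=> jk; have := odd_eval T (x jj).
  rewrite cheb_N -signr_odd /= odd_double /= expr1 /T cheb_cos.
  have -> : (k.*2.+1)%:R * th jj = pi *+ jj.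
    by rewrite /th mulrCA divff ?gt_eqF // mulr1 mulr_natl.
  by rewrite cos_npi mulr2n /s => h; lra.
have hr (jj : nat) : (jj <= k)%N -> `|r.[s jj]| * x jj <= 1.
  move=> jk; have := odd_eval p (x jj); rewrite -/r mulr2n => h.
  have c1 := cos_geN1 (th jj); have c2 := cos_le1 (th jj).
  have h1 : `|p.[x jj]| <= 1 by apply: hp; apply/andP; split; rewrite /x; lra.
  have h2 : `|p.[- x jj]| <= 1 by apply: hp; apply/andP; split; rewrite /x; lra.
  rewrite -(ger0_norm (ltW (xpos jj jk))) -normrM ler_norml.
  move: h1 h2; rewrite !ler_norml => /andP[a1 a2] /andP[a3 a4].
  by rewrite /s; apply/andP; split; lra.
set Rp := (-1) ^+ k *: odd_poly T.
have sRp : (size Rp <= k.+1)%N.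
  apply: leq_trans (size_scale_leq _ _) _; apply: leq_trans (size_odd_poly _) _.
  by have := half_leq (size_cheb k.*2.+1); rewrite /= doubleK.
have H := @altern_bound s k (fun q => q.[0]) r Rp.
have e0 : Rp.[0] = (k.*2.+1)%:R.
  rewrite /Rp hornerZ -deriv0_odd /T.
  by have [_ [_ ->]] := cheb_zero k; rewrite mulrA sgn2 mul1r.
rewrite /= e0 in H; rewrite deriv0_odd -/r; apply: H => //.
- by move=> a b; rewrite hornerD.
- by rewrite horner0.
- by move=> c q; rewrite hornerZ.
- move=> j jk; rewrite /Rp hornerZ normrM normrX normrN1 expr1n mul1r.
  rewrite -(ler_pM2r (xpos j jk)) (le_trans (hr j jk)) //.
  by rewrite -(ger0_norm (ltW (xpos j jk))) -normrM hT // normrX normrN1 expr1n.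
- move=> j jk; rewrite -(pmulr_lge0 _ (xpos j jk)).
  have e : Rp.[s j] * (lj s k j).[0] * x j = (-1) ^+ (k + j) * (lj s k j).[0].
    rewrite /Rp hornerZ exprD -(hT j jk).
    set o := (odd_poly T).[s j]; ring.
  rewrite e; apply: lj_below => //.
  by rewrite /s sqr_ge0.
Qed.
End Interp.

Section T. Variable R : realFieldType.
Lemma r1 (a b c S t : R) : a < 0 -> 0 < b -> 0 <= c -> -a <= b -> S^+2 = -a*b ->
  a <= c + S/2 * t + b/8 * t^+2.
Proof. move=> a0 b0 c0 ab e. have h := sqr_ge0 (b*t + 2*S).
rewrite -subr_ge0 -(pmulr_rge0 _ b0).
have h1 : 0 <= b * c by rewrite mulr_ge0 // ltW.
have h2 : 0 <= - a * b by apply: mulr_ge0; lra.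
lra. Qed.
Lemma r2 (a b c S t : R) : a < 0 -> 0 < b -> 0 <= c -> c <= b/4 -> 0 <= S -> S <= b ->
  -1 <= t -> t <= 1 -> c + S/2 * t + b/8 * t^+2 <= b.
Proof. move=> a0 b0 c0 cb S0 Sb t1 t2.
have h1 : 0 <= S * (1 - t) by apply: mulr_ge0; lra.
have h2 : 0 <= (1 - t) * (1 + t) by apply: mulr_ge0; lra.
have h3 : 0 <= b * (1 - t^+2) by apply: mulr_ge0; lra.
lra. Qed.
Lemma r3 (a b c S t : R) : a < 0 -> 0 < b -> 0 <= c -> c <= b/4 -> S^+2 = -a*b ->
  c + S/2 * t + (a/8) * t^+2 <= b.
Proof. move=> a0 b0 c0 cb e. have h := sqr_ge0 (a*t + 2*S). have a0' : 0 < -a by lra.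
rewrite -subr_ge0 -(pmulr_rge0 _ a0').
have h1 : 0 <= - a * (b/4) by apply: mulr_ge0; lra.
have h2 : 0 <= - a * (b/4 - c) by apply: mulr_ge0; lra.
lra. Qed.
Lemma r4 (a b c S t : R) : a < 0 -> 0 <= c -> 0 <= S -> S <= -a ->
  -1 <= t -> t <= 1 -> a <= c + S/2 * t + (a/8) * t^+2.
Proof. move=> a0 c0 S0 Sa t1 t2.
have h1 : 0 <= S * (1 + t) by apply: mulr_ge0; lra.
have h2 : 0 <= (1 - t) * (1 + t) by apply: mulr_ge0; lra.
have h3 : 0 <= - a * (1 - t^+2) by apply: mulr_ge0; lra.
lra. Qed.
Lemma r5 (b S : R) a : 0 < b -> 0 <= S -> S^+2 = -a*b -> -a <= b -> S <= b.
Proof. move=> *. nra. Qed.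
Lemma r6 (b S : R) a : a < 0 -> 0 <= S -> S^+2 = -a*b -> b <= -a -> S <= -a.
Proof. move=> *. nra. Qed.
End T.

Section Main.
Variable R : realType.

Lemma comp_deriv (h q : {poly R}) x : (h \Po q)^`().[x] = h^`().[q.[x]] * q^`().[x].
Proof. by rewrite deriv_comp hornerM horner_comp. Qed.

Lemma mvt_bound (h : {poly R}) K x : h.[0] = 0 -> 0 <= x ->
  (forall c, 0 <= c <= x -> `|h^`().[c]| <= K) -> `|h.[x]| <= K * x.
Proof.
move=> h0 x0 hK; have [->|xn0] := eqVneq x 0; first by rewrite h0 normr0 mulr0.
have xp : 0 < x by rewrite lt_def xn0 x0.
have [c cI e] := poly_mvt h xp.
move: cI; rewrite in_itv /= => /andP[c0 cx].
have -> : h.[x] = h^`().[c] * x by rewrite -[x in RHS]subr0 -e h0 subr0.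
rewrite normrM (ger0_norm x0) ler_wpM2r //; apply: hK.
by rewrite !ltW.
Qed.

Lemma markov_at (h : {poly R}) L c d : (1 <= L)%N -> (size h <= L)%N ->
  (forall t, 0 <= t <= 1 -> `|h.[c + t * d]| <= 1) ->
  `|h^`().[c]| * `|d| <= 2 * L%:R ^+ 2.
Proof.
move=> L1 sh hb.
pose q : {poly R} := (c + d / 2)%:P - (d / 2) *: 'X.
have hq t : q.[t] = c + ((1 - t) / 2) * d.
  by rewrite /q hornerD hornerN hornerZ hornerC hornerX; field.
have dq t : q^`().[t] = - (d / 2).
  by rewrite /q derivB derivC derivZ derivX sub0r hornerN hornerZ hornerC mulr1.
have sq : (size q <= 2)%N.
  rewrite /q (leq_trans (size_polyD _ _)) // geq_max size_polyN.
  rewrite (leq_trans (size_polyC_leq1 _)) //= (leq_trans (size_scale_leq _ _)) //.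
  by rewrite size_polyX.
have := @markov R L (h \Po q) L1.
rewrite comp_deriv hq dq subrr mul0r mul0r addr0.
have -> : `|h^`().[c]| * `|d| = 2 * `|h^`().[c] * - (d / 2)|.
  by rewrite normrM normrN normrM normfV (@ger0_norm _ 2) //; field.
move=> H; rewrite ler_pM2l //; apply: H.
- rewrite (leq_trans (size_comp_poly_leq _ _)) //.
  have : ((size h).-1 * (size q).-1 <= (size h).-1 * 1)%N.
    by rewrite leq_mul2l; apply/orP; right; lia.
  lia.
- move=> u /andP[u1 u2]; rewrite horner_comp hq; apply: hb; apply/andP; split; lra.
Qed.

Lemma schur_at (h : {poly R}) n c D E : (size h <= n.+1)%N ->
  (forall t, -1 <= t <= 1 -> `|h.[c + D * t + E * t ^+ 2]| <= 1) ->
  `|h^`().[c]| * `|D| <= (n.*2.+1)%:R.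
Proof.
move=> sh hb.
pose q : {poly R} := c%:P + D *: 'X + E *: 'X^2.
have hq t : q.[t] = c + D * t + E * t ^+ 2.
  by rewrite /q !hornerD hornerZ hornerZ hornerC hornerX hornerXn.
have dq : q^`().[0] = D.
  rewrite /q !derivD derivC !derivZ derivX derivXn !hornerD !hornerZ horner0.
  by rewrite hornerMn hornerXn /= expr1 mul0rn mulr0 addr0 hornerC mulr1 add0r.
have sq : (size q <= 3)%N.
  have s1 : (size (c%:P) <= 3)%N by rewrite (leq_trans (size_polyC_leq1 _)).
  have s2 : (size (D *: 'X) <= 3)%N.
    by rewrite (leq_trans (size_scale_leq _ _)) // size_polyX.
  have s3 : (size (E *: 'X^2) <= 3)%N.
    by rewrite (leq_trans (size_scale_leq _ _)) // size_polyXn.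
  apply: leq_trans (size_polyD _ _) _; rewrite geq_max s3 andbT.
  by apply: leq_trans (size_polyD _ _) _; rewrite geq_max s1 s2.
have := @schur0 R n (h \Po q).
rewrite comp_deriv dq hq mulr0 expr0n /= mulr0 !addr0 normrM; apply.
- rewrite (leq_trans (size_comp_poly_leq _ _)) //.
  have : ((size h).-1 * (size q).-1 <= n * 2)%N.
    by rewrite leq_mul //; lia.
  lia.
- move=> u uI; rewrite horner_comp hq; exact: hb.
Qed.

Lemma core (L : nat) (h : {poly R}) a b : (1 <= L)%N -> (size h <= L)%N -> h.[0] = 0 ->
  a < 0 -> 0 < b -> (forall y, a <= y <= b -> `|h.[y]| <= 1) ->
  forall x, 0 <= x <= b / 4 ->
  `|h.[x]| <= 8 * L%:R ^+ 2 / (b - a) * x /\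
  `|h.[x]| <= 4 * L%:R / Num.sqrt `|a * b| * x.
Proof.
move=> L1 sh h0 a0 b0 hb x /andP[x0 xb].
have ba : 0 < b - a by lra.
have LR : 1 <= L%:R :> R by rewrite ler1n.
split; apply: mvt_bound => // c /andP[c0 cx]; have cb : c <= b / 4 by lra.
- rewrite ler_pdivlMr //.
  have y0 : 0 <= `|h^`().[c]| by [].
  case: (lerP (- a) b) => hab.
  + have := @markov_at h L c (b - c) L1 sh.
    rewrite (ger0_norm (_ : 0 <= b - c)); last by lra.
    move=> /(_ _) H.
    have {}H : `|h^`().[c]| * (b - c) <= 2 * L%:R ^+ 2.
      apply: H => t /andP[t0 t1]; apply: hb.
      have : 0 <= t * (b - c) <= b - c.
        apply/andP; split; first by apply: mulr_ge0; lra.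
        have : 0 <= (1 - t) * (b - c) by apply: mulr_ge0; lra.
        lra.
      move=> /andP[u1 u2]; apply/andP; split; lra.
    have h1 : 0 <= `|h^`().[c]| * (8 / 3 * (b - c) - (b - a)) by apply: mulr_ge0; lra.
    have h2 : 0 <= L%:R ^+ 2 :> R by apply: sqr_ge0.
    lra.
  + have := @markov_at h L c (a - c) L1 sh.
    rewrite (ler0_norm (_ : a - c <= 0)); last by lra.
    move=> /(_ _) H.
    have {}H : `|h^`().[c]| * - (a - c) <= 2 * L%:R ^+ 2.
      apply: H => t /andP[t0 t1]; apply: hb.
      have : a - c <= t * (a - c) <= 0.
        apply/andP; split; last by rewrite mulr_ge0_le0 //; lra.
        have : 0 <= (1 - t) * (c - a) by apply: mulr_ge0; lra.
        lra.
      move=> /andP[u1 u2]; apply/andP; split; lra.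
    have h1 : 0 <= `|h^`().[c]| * (2 * (c - a) - (b - a)) by apply: mulr_ge0; lra.
    have h2 : 0 <= L%:R ^+ 2 :> R by apply: sqr_ge0.
    lra.
- have abn : a * b < 0 by nra.
  have ab : `|a * b| = - a * b by rewrite ler0_norm ?mulNr // ltW.
  set S := Num.sqrt `|a * b|.
  have S2 : S ^+ 2 = - a * b by rewrite /S sqr_sqrtr // ab.
  have S0 : 0 < S by rewrite /S sqrtr_gt0 ab; apply: mulr_gt0; lra.
  rewrite ler_pdivlMr //.
  case: L L1 sh LR => [//|n] _ sh LR.
  have e1 : (n.*2.+1)%:R = 2 * n%:R + 1 :> R by rewrite -natr1 -muln2 natrM mulrC.
  have e2 : n.+1%:R = n%:R + 1 :> R by rewrite natr1.
  case: (lerP (- a) b) => hab.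
  + have Sb : S <= b by apply: (@r5 R b S a) => //; exact: ltW.
    have := @schur_at h n c (S / 2) (b / 8) sh.
    rewrite (ger0_norm (_ : 0 <= S / 2)); last by lra.
    move=> H; have {}H : `|h^`().[c]| * (S / 2) <= (n.*2.+1)%:R.
      apply: H => t /andP[t1 t2]; apply: hb; apply/andP; split.
      * exact: r1.
      * by apply: (@r2 R a b c S t) => //; exact: ltW.
    rewrite e1 in H; rewrite e2; lra.
  + have Sa : S <= - a by apply: (@r6 R b S a) => //; [exact: ltW | exact: ltW].
    have := @schur_at h n c (S / 2) (a / 8) sh.
    rewrite (ger0_norm (_ : 0 <= S / 2)); last by lra.
    move=> H; have {}H : `|h^`().[c]| * (S / 2) <= (n.*2.+1)%:R.
      apply: H => t /andP[t1 t2]; apply: hb; apply/andP; split.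
      * by apply: r4 => //; exact: ltW.
      * exact: r3.
    rewrite e1 in H; rewrite e2; lra.
Qed.
End Main.

Theorem lemma3p13 (R : realType) (L : nat) (g : {poly R}) (a b : R) :
  (1 <= L)%N ->
  (size g <= L.+1)%N ->
  g.[0] = 0 ->
  (g^`()).[0] = 0 ->
  a < 0 -> 0 < b ->
  (forall x : R, a <= x <= b -> `|g.[x]| <= `|x|) ->
  (forall x : R, a / 4 <= x <= b / 4 ->
     `|x| <= 3 * (b - a) / (L%:R ^+ 2) ->
     `|g.[x]| <= 8 * L%:R ^+ 2 / (b - a) * x ^+ 2)
  /\
  (forall x : R, a / 4 <= x <= b / 4 ->
     `|x| <= Num.sqrt `|a * b| / (4 * L%:R) ->
     `|g.[x]| <= 4 * L%:R / Num.sqrt `|a * b| * x ^+ 2).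
Proof.
move=> L1 sg g0 dg0 a0 b0 hg.
set h := drop_poly 1 g.
have gE x : g.[x] = h.[x] * x.
  rewrite -{1}(poly_take_drop 1 g) hornerD hornerM hornerXn expr1.
  have -> : take_poly 1 g = 0.
    apply/polyP => i; rewrite coef_take_poly coef0; case: i => //=.
    by rewrite -horner_coef0 g0.
  by rewrite horner0 add0r.
have sh : (size h <= L)%N by rewrite size_drop_poly; lia.
have h0 : h.[0] = 0.
  by move: dg0; rewrite /h !horner_coef0 coef_drop_poly add0n coef_deriv mulr1n.
have hb y : a <= y <= b -> `|h.[y]| <= 1.
  move=> yI; have [->|y0] := eqVneq y 0; first by rewrite h0 normr0 ler01.
  have := hg y yI; rewrite gE normrM -{2}[`|y|]mul1r ler_pM2r //.
  by rewrite normr_gt0.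
have key x : a / 4 <= x <= b / 4 ->
    `|h.[x]| <= 8 * L%:R ^+ 2 / (b - a) * `|x| /\
    `|h.[x]| <= 4 * L%:R / Num.sqrt `|a * b| * `|x|.
  move=> /andP[xa xb]; case: (lerP 0 x) => x0.
    by rewrite (ger0_norm x0); apply: (@core R L h a b L1 sh h0 a0 b0 hb x); rewrite x0 xb.
  pose h2 := h \Po (- 'X).
  have e2 y : h2.[y] = h.[- y] by rewrite /h2 horner_comp hornerN hornerX.
  have sh2 : (size h2 <= L)%N.
    by rewrite /h2 size_comp_poly2 // size_polyN size_polyX.
  have H := @core R L h2 (- b) (- a) L1 sh2.
  have E1 : - a - - b = b - a by rewrite opprK addrC.
  have E2 : - b * - a = a * b by rewrite mulrNN mulrC.
  rewrite E1 E2 in H.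
  have H2 : h2.[0] = 0 by rewrite e2 oppr0.
  have := H H2 _ _ _ (- x); rewrite e2 opprK (ltr0_norm x0); apply.
  - by rewrite oppr_lt0.
  - by rewrite oppr_gt0.
  - move=> y /andP[y1 y2]; rewrite e2; apply: hb; apply/andP; split; lra.
  - apply/andP; split; lra.
have hsq (z : R) : `|z| * `|z| = z ^+ 2 by rewrite -normrM ger0_norm -?expr2 ?sqr_ge0.
split => x xI _; have [k1 k2] := key x xI; rewrite gE normrM -hsq mulrA.
  by rewrite ler_wpM2r.
by rewrite ler_wpM2r.
Qed.
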